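(* There is a constant $K>0$ such that for every $n\in\mathbb{N}$ (with $n\ge 2$) there exists a non-trivial word $w_n\in\mathbb{F}_2$ of length at most $K\cdot\log(n)^{\log_\varphi(2)}$ which is a law for every nilpotent group of order at most $n$, where $\varphi$ is the golden ratio.
   Context: $\mathbb{F}_2$ is the free group on two generators with word length relative to the free generators and their inverses. A word $w\in\mathbb{F}_2$ is a law for a group $G$ if $w(g,h)=1$ for all $g,h\in G$, where $w(g,h)$ is obtained by substituting $g,h$ for the generators. *)

(* Defs.v *)
From mathcomp Require Import all_boot all_fingroup all_solvable.
From Stdlib Require Import Reals.

Set Implicit Arguments.
Unset Strict Implicit.
Unset Printing Implicit Defensive.

(* A letter of the free group F_2 = <a, b>:
   first component: false = generator a, true = generator b;
   second component: false = the generator itself, true = its inverse. *)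
Definition letter := (bool * bool)%type.

Definition cancels (x y : letter) : bool := (x.1 == y.1) && (x.2 != y.2).

(* Elements of F_2 are represented by freely reduced words. *)
Definition reduced (w : seq letter) : bool :=
  match w with
  | [::] => true
  | x :: s => path (fun x y => ~~ cancels x y) x s
  end.

(* A non-trivial element of F_2: a nonempty reduced word.
   Its word length w.r.t. {a, b, a^-1, b^-1} is then its size. *)
Definition nontrivial_word (w : seq letter) : bool :=
  reduced w && (size w != 0%N).

Open Scope group_scope.

Definition letter_val (gT : finGroupType) (g h : gT) (l : letter) : gT :=
  let x := if l.1 then h else g in
  if l.2 then x^-1 else x.

Definition eval_word (gT : finGroupType) (g h : gT) (w : seq letter) : gT :=
  foldr (fun l acc => letter_val g h l * acc) 1 w.

Definition is_law (gT : finGroupType) (G : {group gT}) (w : seq letter) : Prop :=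
  forall g h, g \in G -> h \in G -> eval_word g h w = 1.

Close Scope group_scope.

Definition phi_golden : R := ((1 + sqrt 5) / 2)%R.

(* Main.v *)
Require Import Defs.
From mathcomp Require Import all_boot all_fingroup all_solvable.
From Stdlib Require Import Reals Lra.
Set Implicit Arguments. Unset Strict Implicit. Unset Printing Implicit Defensive.
Section GroupPart.
Open Scope group_scope.
Definition stepT (gT : finGroupType) (p : gT * gT) := (p.2^-1 * p.1^-1, p.2 * p.1).

Definition flip (l : letter) : letter := (l.1, ~~ l.2).
Definition winv (w : seq letter) := rev (map flip w).

Fixpoint red (w : seq letter) : seq letter :=
  match w with
  | [::] => [::]
  | x :: s => match red s with
              | y :: t => if cancels x y then t else x :: y :: t
              | [::] => [:: x]
              end
  end.

Lemma red_size w : (size (red w) <= size w)%N.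
Proof.
elim: w => //= x s; case: (red s) => [|y t] //= IH; case: ifP => _ /=.
  by apply: leqW; apply: ltnW.
by [].
Qed.

Lemma red_reduced w : reduced (red w).
Proof.
elim: w => //= x s; case: (red s) => [|y t] //= IH; case: ifP => C.
  by case: t IH => //= z u /andP[].
by rewrite /= C.
Qed.

Fixpoint wab n : seq letter * seq letter :=
  match n with
  | 0 => ([:: (false, false)], [:: (true, false)])
  | n'.+1 => (winv ((wab n').1 ++ (wab n').2), (wab n').2 ++ (wab n').1)
  end.

Lemma size_wab n : size (wab n).1 = expn 2 n /\ size (wab n).2 = expn 2 n.
Proof.
elim: n => [|n [IH1 IH2]] //=.
by rewrite /winv size_rev size_map !size_cat IH1 IH2 expnS mul2n -addnn.
Qed.

Section Eval.
Variables (gT : finGroupType) (g h : gT).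

Lemma eval_cat s t : eval_word g h (s ++ t) = eval_word g h s * eval_word g h t.
Proof. elim: s => [|x s IH] /=; first by rewrite mul1g. by rewrite IH mulgA. Qed.

Lemma letter_val_flip l : letter_val g h (flip l) = (letter_val g h l)^-1.
Proof. by case: l => [[] []]; rewrite /letter_val /= ?invgK. Qed.

Lemma eval_winv w : eval_word g h (winv w) = (eval_word g h w)^-1.
Proof.
elim: w => [|x s IH] /=; first by rewrite invg1.
rewrite /winv map_cons rev_cons -cats1 eval_cat -/(winv s) IH /= mulg1.
by rewrite letter_val_flip invMg.
Qed.

Lemma eval_red w : eval_word g h (red w) = eval_word g h w.
Proof.
elim: w => //= x s IH; rewrite -IH; case: (red s) => [|y t] //=; case: ifP => C //=.
rewrite mulgA; case: x y C => [a b] [c d]; rewrite /cancels /= => /andP[/eqP <- ].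
by case: b; case: d => //= _; rewrite /letter_val /=; rewrite ?mulVg ?mulgV mul1g.
Qed.

Lemma eval_wab n : eval_word g h (wab n).1 = (iter n (@stepT gT) (g, h)).1 /\
                   eval_word g h (wab n).2 = (iter n (@stepT gT) (g, h)).2.
Proof.
elim: n => [|n [IH1 IH2]] /=; first by rewrite !mulg1.
by rewrite eval_winv !eval_cat IH1 IH2 invMg.
Qed.

End Eval.

Section Lcn.
Variable gT : finGroupType.
Lemma three_subgroup_mod (W N G H K : {group gT}) :
  N <| W -> G \subset W -> H \subset W -> K \subset W ->
  [~: G, H, K] \subset N -> [~: H, K, G] \subset N -> [~: K, G, H] \subset N.
Proof.
move=> nNW sGW sHW sKW h1 h2.
have nN (A : {set gT}) : A \subset W -> A \subset 'N(N).
  move=> sAW. exact: (subset_trans sAW (normal_norm nNW)).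
have sR (A B : {set gT}) : A \subset W -> B \subset W -> [~: A, B] \subset W.
  move=> sA sB; exact: (comm_subG sA sB).
have e (A B C : {set gT}) : A \subset W -> B \subset W -> C \subset W ->
   ([~: A, B, C] \subset N) = ([~: A / N, B / N, C / N] \subset [1]).
  move=> sA sB sC.
  rewrite -quotient_sub1; last exact: nN (sR _ _ (sR _ _ sA sB) sC).
  rewrite quotientR; [|exact: nN (sR _ _ sA sB)|exact: nN sC].
  by rewrite quotientR; [|exact: nN sA|exact: nN sB].
rewrite e // in h1; rewrite e // in h2; rewrite e //.
move/trivgP: h1 => h1; move/trivgP: h2 => h2; apply/trivgP; exact: three_subgroup h1 h2.
Qed.
Lemma lcn_comm (W : {group gT}) j : forall i,
  [~: 'L_i.+1(W), 'L_j.+1(W)] \subset 'L_(i + j).+2(W).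
Proof.
elim: j => [|j IH] i.
  rewrite addn0. exact: subxx.
rewrite (lcnSn j W) commGC.
apply: (@three_subgroup_mod W ('L_(i + j.+1).+2(W))%G W ('L_i.+1(W))%G ('L_j.+1(W))%G).
- exact: lcn_normal.
- exact: subxx.
- exact: lcn_sub.
- exact: lcn_sub.
- rewrite /= (commGC W) -lcnSn. have := IH i.+1. by rewrite addSnnS.
- apply: subset_trans (commSg _ (IH i)) _. rewrite addnS -lcnSn. exact: subxx.
Qed.
Lemma mem_lcn_comm (W : {group gT}) a b x y :
  x \in 'L_a.+1(W) -> y \in 'L_b.+1(W) -> [~ x, y] \in 'L_(a + b).+2(W).
Proof. move=> xa yb; exact: (subsetP (lcn_comm W b a)) _ (mem_commg xa yb). Qed.

Fixpoint fib (n : nat) : nat :=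
  match n with O => O | S O => 1 | S ((S k) as m) => fib m + fib k end.

Lemma fib_pos n : (0 < fib n.+1)%N.
Proof.
suff: (0 < fib n.+1)%N /\ (0 < fib n.+2)%N by case.
elim: n => [|n [H1 H2]] //=; split => //. by rewrite addn_gt0 H2.
Qed.

Lemma st_inv (W : {group gT}) g h : g \in W -> h \in W -> forall n,
  [/\ (iter n (@stepT gT) (g, h)).1 \in 'L_(fib n.+1)(W),
      (iter n (@stepT gT) (g, h)).1 * (iter n (@stepT gT) (g, h)).2 \in 'L_(fib n.+2)(W)
    & (iter n (@stepT gT) (g, h)).2 \in W].
Proof.
move=> gW hW; elim=> [|n IH]; first by split => //=; rewrite groupM.
have fibE : fib n.+3 = (fib n.+2 + fib n.+1)%N by [].
rewrite fibE; case: IH.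
move: (fib n.+1) (fib n.+2) (fib_pos n) (fib_pos n.+1) => f1 f2 p1 p2.
rewrite [iter n.+1 _ _]/=.
move: (iter n (@stepT gT) (g, h)) => [a b] /= Ha Hs Hb.
rewrite /stepT /=; split.
- by rewrite -invMg groupV.
- have -> : b^-1 * a^-1 * (b * a) = [~ a * b, a].
    by rewrite /commg invMg !mulgA mulgKV.
  move: Hs Ha p1 p2.
  case: f2 => [|c] //; case: f1 => [|d] // Hs Ha _ _.
  rewrite addSn addnS. exact: mem_lcn_comm.
- by rewrite groupM // (subsetP (lcn_sub f1 W)).
Qed.

Lemma nil_class_card (G : {group gT}) : nilpotent G -> leq (expn 2 (nil_class G)) #|G|.
Proof.
move=> nilG.
suff H : forall k, (k <= nil_class G)%N -> leq (expn 2 k * #|'L_k.+1(G)|) #|G|.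
  apply: leq_trans (H _ (leqnn _)). by rewrite leq_pmulr ?cardG_gt0.
elim=> [|k IH] Hk; first by rewrite mul1n.
have IH' := IH (ltnW Hk).
have ntL : 'L_k.+1(G) != 1.
  apply/eqP => E.
  have : (nil_class G <= k)%N by apply/(lcn_nil_classP k nilG).
  by rewrite leqNgt Hk.
have prop : 'L_k.+2(G) \proper 'L_k.+1(G).
  rewrite lcnSn. apply: nil_comm_properl nilG (lcn_sub _ _) ntL _.
  by rewrite subsetI subxx lcn_norm.
have H2 : (2 * #|'L_k.+2(G)| <= #|'L_k.+1(G)|)%N.
  have sub := proper_sub prop.
  rewrite -(Lagrange sub) mulnC leq_pmul2l ?cardG_gt0 // indexg_gt1.
  exact: proper_subn.
rewrite expnS -mulnA; apply: leq_trans IH'.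
by rewrite mulnCA leq_pmul2l ?expn_gt0.
Qed.
End Lcn.


Definition o0 : 'I_5 := @Ordinal 5 0 isT.
Definition o1 : 'I_5 := @Ordinal 5 1 isT.
Definition o2 : 'I_5 := @Ordinal 5 2 isT.
Definition o3 : 'I_5 := @Ordinal 5 3 isT.
Definition o4 : 'I_5 := @Ordinal 5 4 isT.
Definition fg (i : 'I_5) : 'I_5 :=
  match val i with 0 => o1 | 1 => o2 | 2 => o3 | 3 => o4 | _ => o0 end.
Definition fgi (i : 'I_5) : 'I_5 :=
  match val i with 0 => o4 | 1 => o0 | 2 => o1 | 3 => o2 | _ => o3 end.
Definition fh (i : 'I_5) : 'I_5 :=
  match val i with 0 => o1 | 1 => o3 | 2 => o0 | 3 => o4 | _ => o2 end.
Definition fhi (i : 'I_5) : 'I_5 :=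
  match val i with 0 => o2 | 1 => o0 | 2 => o4 | 3 => o1 | _ => o3 end.

Lemma fgK : cancel fg fgi.
Proof. by case=> [[|[|[|[|[|k]]]]] Hi]; apply/val_inj. Qed.
Lemma fgiK : cancel fgi fg.
Proof. by case=> [[|[|[|[|[|k]]]]] Hi]; apply/val_inj. Qed.
Lemma fhK : cancel fh fhi.
Proof. by case=> [[|[|[|[|[|k]]]]] Hi]; apply/val_inj. Qed.
Lemma fhiK : cancel fhi fh.
Proof. by case=> [[|[|[|[|[|k]]]]] Hi]; apply/val_inj. Qed.

Definition g0 : {perm 'I_5} := perm (can_inj fgK).
Definition gi0 : {perm 'I_5} := perm (can_inj fgiK).
Definition h0 : {perm 'I_5} := perm (can_inj fhK).
Definition hi0 : {perm 'I_5} := perm (can_inj fhiK).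

Lemma gV : g0^-1 = gi0.
Proof. apply/eqP; rewrite eq_invg_mul; apply/eqP/permP => i.
by rewrite permM !permE fgK. Qed.
Lemma hV : h0^-1 = hi0.
Proof. apply/eqP; rewrite eq_invg_mul; apply/eqP/permP => i.
by rewrite permM !permE fhK. Qed.

Ltac ptac := apply/permP; case=> [[|[|[|[|[|?]]]]] ?]; apply/val_inj; rewrite !permM !permE //.

Lemma cyc : stepT (stepT (stepT (g0, h0))) = (g0, h0).
Proof.
rewrite /stepT /= !invMg !invgK gV hV.
congr pair; ptac.
Qed.

Lemma nz : forall p, p \in [:: (g0,h0); stepT (g0,h0); stepT (stepT (g0,h0))] -> p.1 * p.2 != 1.
Proof.
move=> p; rewrite !inE => /or3P[] /eqP -> /=; rewrite /stepT /= ?invMg ?invgK ?gV ?hV;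
 apply/eqP => /permP/(_ o0); rewrite !permM !permE //.
Qed.

End GroupPart.
Close Scope group_scope.

Section RealPart.
Local Open Scope R_scope.

Lemma ln_le' x y : 0 < x -> x <= y -> ln x <= ln y.
Proof. move=> x0 [xy|->]; [left; exact: ln_increasing | right; reflexivity]. Qed.

Lemma exp_le' x y : x <= y -> exp x <= exp y.
Proof. move=> [xy|->]; [left; exact: exp_increasing | right; reflexivity]. Qed.

Lemma ln2_pos : 0 < ln 2.
Proof. have := ln_lt_2; lra. Qed.

Lemma sqrt5 : sqrt 5 * sqrt 5 = 5 /\ 0 <= sqrt 5.
Proof. split; [apply: sqrt_sqrt; lra | exact: sqrt_pos]. Qed.

Lemma phi_gt1 : 1 < phi_golden.
Proof. rewrite /phi_golden; have [h1 h2] := sqrt5; nra. Qed.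

Lemma phi_le2 : phi_golden <= 2.
Proof. rewrite /phi_golden; have [h1 h2] := sqrt5; nra. Qed.

Lemma phi_sq : phi_golden * phi_golden = phi_golden + 1.
Proof. rewrite /phi_golden; have [h1 h2] := sqrt5; nra. Qed.

Lemma INR_fibSS k : INR (fib k.+2) = INR (fib k.+1) + INR (fib k).
Proof. rewrite -plus_INR; reflexivity. Qed.

Lemma fib_lb k : phi_golden ^ k <= INR (fib k.+2).
Proof.
suff: phi_golden ^ k <= INR (fib k.+2) /\ phi_golden ^ k.+1 <= INR (fib k.+3) by case.
elim: k => [|k [H1 H2]].
  split; rewrite /= ?INR_fibSS /=; have := phi_le2; lra.
split => //.
rewrite INR_fibSS.
have -> : phi_golden ^ k.+2 = phi_golden ^ k.+1 + phi_golden ^ k.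
  by rewrite /= -Rmult_assoc phi_sq; ring.
lra.
Qed.

Lemma INR_expn (a k : nat) : INR (expn a k) = INR a ^ k.
Proof.
elim: k => [|k IH] //; rewrite expnS /= -IH.
exact: (mult_INR a (expn a k)).
Qed.

Definition eR : R := ln 2 / ln phi_golden.
Definition CR : R := exp (- (eR * ln (ln 2))).

Lemma lnphi_pos : 0 < ln phi_golden.
Proof. rewrite -ln_1; apply: ln_increasing; [lra | exact: phi_gt1]. Qed.

Lemma eR_pos : 0 < eR.
Proof. rewrite /eR; have := ln2_pos; have := lnphi_pos => *; apply: Rdiv_lt_0_compat; lra. Qed.

Lemma CR_pos : 0 < CR.
Proof. exact: exp_pos. Qed.

Lemma CR_Rpower (n : nat) : leq 2 n ->
  CR * Rpower (ln (INR n)) eR = exp (eR * (ln (ln (INR n)) - ln (ln 2))).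
Proof.
move=> _; rewrite /CR /Rpower -exp_plus; f_equal; ring.
Qed.

Lemma base_bound (n : nat) : leq 2 n -> 1 <= CR * Rpower (ln (INR n)) eR.
Proof.
move=> n2; rewrite CR_Rpower // -exp_0; apply: exp_le'.
have h2 : 2 <= INR n by have := le_INR 2 n (ssrnat.leP n2) => /=; lra.
have := ln2_pos => l2.
have : ln 2 <= ln (INR n) by apply: ln_le'; lra.
move=> hl; have := ln_le' l2 hl; have := eR_pos; nra.
Qed.

Lemma main_bound (n m q : nat) : leq 2 n -> phi_golden ^ m <= INR q ->
  leq (expn 2 q) n -> INR (expn 2 m) <= CR * Rpower (ln (INR n)) eR.
Proof.
move=> n2 hq hqn; rewrite CR_Rpower //.
have l2 := ln2_pos; have lp := lnphi_pos; have e0 := eR_pos.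
have ppos : 0 < phi_golden ^ m by apply: pow_lt; have := phi_gt1; lra.
have h2q : 2 ^ q <= INR n.
  have := le_INR _ _ (ssrnat.leP hqn); rewrite INR_expn.
  have -> : INR 2 = 2 by rewrite /=; lra.
  lra.
have hqL : INR q * ln 2 <= ln (INR n).
  rewrite -ln_pow; last lra. apply: ln_le' => //; apply: pow_lt; lra.
have Lpos : 0 < ln (INR n) by have := pos_INR q; nra.
have hqL' : INR q <= ln (INR n) / ln 2.
  apply: (Rmult_le_reg_r (ln 2)) => //.
  have -> : ln (INR n) / ln 2 * ln 2 = ln (INR n) by field; lra.
  lra.
have hm : INR m * ln phi_golden <= ln (ln (INR n)) - ln (ln 2).
  rewrite -ln_pow; last by have := phi_gt1; lra.
  have -> : ln (ln (INR n)) - ln (ln 2) = ln (ln (INR n) / ln 2).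
    rewrite /Rdiv ln_mult; [rewrite ln_Rinv //; ring | lra | by apply: Rinv_0_lt_compat].
  apply: ln_le' => //; lra.
rewrite INR_expn (_ : INR 2 = 2); last by rewrite /=; lra.
rewrite -(exp_ln (2 ^ m)); last by apply: pow_lt; lra.
apply: exp_le'; rewrite ln_pow; last lra.
have -> : INR m * ln 2 = eR * (INR m * ln phi_golden).
  rewrite /eR; field; lra.
apply: Rmult_le_compat_l; lra.
Qed.

End RealPart.

Lemma fib_ge m : (m.+1 <= fib m.+2)%N.
Proof.
suff: (m.+1 <= fib m.+2)%N /\ (m.+2 <= fib m.+3)%N by case.
elim: m => [|m [H1 H2]] //; split => //.
have -> : fib m.+4 = (fib m.+3 + fib m.+2)%N by [].
apply: leq_trans (leq_add H2 H1). by rewrite addnS addSn !ltnS leq_addr.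
Qed.

Lemma orbit m : iter m (@stepT _) (g0, h0) \in
  [:: (g0,h0); stepT (g0,h0); stepT (stepT (g0,h0))].
Proof.
elim: m => [|m IH]; first by rewrite inE eqxx.
rewrite [iter m.+1 _ _]/=.
move: IH; rewrite !inE => /or3P[] /eqP ->.
- by rewrite eqxx orbT.
- by rewrite eqxx !orbT.
- by rewrite cyc eqxx.
Qed.

Lemma nz_iter m : ((iter m (@stepT _) (g0, h0)).1 * (iter m (@stepT _) (g0, h0)).2 != 1)%g.
Proof. exact: nz (orbit m). Qed.

Theorem corollary2p7 :
  exists K : R, (0 < K)%R /\
    forall n : nat, (2 <= n)%N ->
      exists w : seq letter,
        nontrivial_word w /\
        (INR (size w) <= K * Rpower (ln (INR n)) (ln 2 / ln phi_golden))%R /\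
        forall (gT : finGroupType) (G : {group gT}),
          nilpotent G -> (#|G| <= n)%N -> is_law G w.
Proof.
exists (4 * CR)%R; split; first by have := CR_pos; lra.
move=> n n2.
have exP : exists m, leq n.+1 (expn 2 (fib m.+2)).
  exists n; apply: leq_trans (ltn_expl n (isT : (1 < 2)%N)) _.
  by rewrite leq_pexp2l // ltnW // fib_ge.
case: (ex_minnP exP) => m Pm minm.
set u := (wab m).1 ++ (wab m).2.
have [s1 s2] := size_wab m.
have su : size u = expn 2 m.+1 by rewrite size_cat s1 s2 expnS mul2n -addnn.
exists (red u); split; [|split].
- rewrite /nontrivial_word red_reduced /=; apply/eqP => /size0nil E.
  have := nz_iter m.
  have [e1 e2] := eval_wab g0 h0 m.
  by rewrite -e1 -e2 -eval_cat -/u -(eval_red g0 h0 u) E /= eqxx.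
- have hs : (INR (size (red u)) <= INR (expn 2 m.+1))%R.
    by rewrite -su; apply: le_INR; apply/ssrnat.leP; exact: red_size.
  apply: Rle_trans hs _.
  case: m Pm minm {s1 s2 su u} => [|m'] Pm minm.
    have := base_bound n2; rewrite /eR => hb.
    have -> : INR (expn 2 1) = 2%R by rewrite /=; lra.
    lra.
  have Pn : leq (expn 2 (fib m'.+2)) n.
    by rewrite leqNgt; apply/negP => /minm; rewrite ltnn.
  have := main_bound n2 (fib_lb m') Pn; rewrite /eR => hb.
  have -> : INR (expn 2 m'.+2) = (4 * INR (expn 2 m'))%R.
    by rewrite !INR_expn /=; ring.
  lra.
- move=> gT G nilG cardG g h gG hG.
  have [e1 e2] := eval_wab g h m.
  rewrite eval_red /u eval_cat e1 e2.
  have [_ Hs _] := st_inv gG hG m.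
  have lt : (nil_class G < fib m.+2)%N.
    rewrite -(@ltn_exp2l 2) //.
    exact: leq_ltn_trans (nil_class_card nilG) (leq_ltn_trans cardG Pm).
  move: Hs lt (fib_pos m.+1); case: (fib m.+2) => [|k] // Hs lt _.
  have /(lcn_nil_classP k nilG) E : (nil_class G <= k)%N by [].
  by move: Hs; rewrite E => /set1P.
Qed.
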